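(* Let $I=[a,b]$ be a compact interval, $r\ge1$ an integer, $g\in C^r(I,\mathbb R)$ with $\|g'\|_{L^\infty(I)}\le1$, put $C_r:=\|g^{(r)}\|_{L^\infty(I)}$, and let $C>0$. Then for every $\lambda$ with $0<\lambda\le\|g\|_\infty$ and $C\lambda\le|I|$ there is a finite family of pairwise disjoint open (relative to $I$) intervals $I_{\lambda,i}$, $i\in\mathcal I_\lambda$, each of length $|I_{\lambda,i}|\ge C\lambda$, such that: (i) $|\mathcal I_\lambda|\le 30r\big(1+|I|\,C_r^{1/r}\lambda^{-1/r}\big)$; (ii) with $V_\lambda:=\bigcup_{i\in\mathcal I_\lambda}I_{\lambda,i}$, we have $\{t\in I:|g(t)|<\lambda\}\subset V_\lambda\subset\{t\in I:|g(t)|<(8+C)\lambda\}$.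
   Context: $\|g\|_\infty$ denotes the supremum of $|g|$ over $I$, and $|I|=b-a$. *)

(* Defs.v *)
From Stdlib Require Import Reals.
Open Scope R_scope.

(* x^y for x >= 0, y real, with the convention 0^y = 0 for y <> 0, 0^0 = 1
   (Stdlib's Rpower 0 y would be exp 0 = 1, which is wrong). *)
Definition rpow (x y : R) : R :=
  if Req_EM_T x 0 then (if Req_EM_T y 0 then 1 else 0) else Rpower x y.

Definition cont_within (a b : R) (f : R -> R) (x : R) : Prop :=
  forall eps, 0 < eps -> exists delta, 0 < delta /\
    forall y, a <= y <= b -> Rabs (y - x) < delta -> Rabs (f y - f x) < eps.

Definition Cr_on (r : nat) (a b : R) (g : R -> R) (D : nat -> R -> R) : Prop :=
  (forall x, a <= x <= b -> D 0%nat x = g x) /\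
  (forall k, (k <= r)%nat -> forall x, a <= x <= b -> cont_within a b (D k) x) /\
  (forall k, (k < r)%nat -> forall x, a < x < b ->
      derivable_pt_lim (D k) x (D (S k) x)).

Definition is_supnorm (a b : R) (f : R -> R) (s : R) : Prop :=
  is_lub (fun y => exists t, a <= t <= b /\ y = Rabs (f t)) s.

(* A relatively open subinterval of [a,b], described by endpoints l < u in
   [a,b] and flags saying whether the endpoint a (resp. b) is included:
   J = (l,u), [a,u), (l,b] or [a,b]. *)
Definition rel_interval (a b l u : R) (cl cr : bool) (t : R) : Prop :=
  a <= t <= b /\ (l < t \/ (cl = true /\ t = l)) /\ (t < u \/ (cr = true /\ t = u)).

Definition rel_open_ok (a b l u : R) (cl cr : bool) : Prop :=
  a <= l < u /\ u <= b /\ (cl = true -> l = a) /\ (cr = true -> u = b).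

(* Main.v *)
Require Import Defs.
From Stdlib Require Import Reals Lra Lia Sorting List ZArith Arith Classical IndefiniteDescription.
From Coquelicot Require Import Coquelicot.
From Stdlib Require Import Sorting List.
Import ListNotations.
Local Open Scope nat_scope.

Definition runs_spec (v : nat -> Prop) (N m : nat) (st en : nat -> nat) :=
  (forall i, i < m -> st i <= en i < N /\ (forall k, st i <= k <= en i -> v k) /\
      (st i = 0 \/ ~ v (st i - 1)) /\ (S (en i) = N \/ ~ v (S (en i)))) /\
  (forall i, S i < m -> S (en i) < st (S i)) /\
  (forall k, k < N -> v k -> exists i, i < m /\ st i <= k <= en i).

Lemma runs_order v N m st en : runs_spec v N m st en ->
  forall d i, i + S d < m -> S (en i) < st (i + S d).
Proof.
  intros [H1 [H2 H3]]. induction d; intros i Hi.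
  - replace (i + 1) with (S i) by lia. apply H2. lia.
  - specialize (IHd i ltac:(lia)). replace (i + S (S d)) with (S (i + S d)) by lia.
    assert (A := H2 (i + S d) ltac:(lia)). assert (B := H1 (i + S d) ltac:(lia)). lia.
Qed.

Lemma runs_order' v N m st en : runs_spec v N m st en ->
  forall i j, i < j < m -> S (en i) < st j.
Proof.
  intros H i j Hij. replace j with (i + S (j - i - 1)) by lia.
  apply (runs_order v N m st en H). lia.
Qed.

Lemma runs_exist (v : nat -> Prop) : forall N, exists m st en, runs_spec v N m st en.
Proof.
  induction N as [|N IH].
  - exists 0, (fun _ => 0), (fun _ => 0). repeat split; intros; lia.
  - destruct IH as [m [st [en H]]].
    pose proof (runs_order' v N m st en H) as Ho.
    destruct H as [H1 [H2 H3]].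
    destruct (classic (v N)) as [HvN|HvN].
    + destruct (classic (0 < m /\ S (en (m - 1)) = N)) as [[Hm HeN]|Hc].
      * exists m, st, (fun i => if Nat.eqb i (m - 1) then N else en i).
        split; [|split].
        -- intros i Hi. destruct (Nat.eqb_spec i (m - 1)) as [->|Hne].
           ++ destruct (H1 (m - 1) ltac:(lia)) as [A [B [C D]]].
              repeat split; try lia; auto.
              intros k Hk. destruct (Nat.eq_dec k N) as [->|]; auto. apply B; lia.
           ++ destruct (H1 i Hi) as [A [B [C D]]]. assert (Hoi := Ho i (m - 1) ltac:(lia)).
              destruct (H1 (m-1) ltac:(lia)) as [A' _].
              repeat split; try lia; auto. destruct D as [D|D]; [lia|auto].
        -- intros i Hi. destruct (Nat.eqb_spec i (m - 1)); [lia|]. apply H2; lia.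
        -- intros k Hk Hv. destruct (Nat.eq_dec k N) as [->|].
           ++ exists (m - 1). destruct (Nat.eqb_spec (m - 1) (m - 1)); [|lia].
              destruct (H1 (m - 1) ltac:(lia)) as [A _]. lia.
           ++ destruct (H3 k ltac:(lia) Hv) as [i [Hi Hk']]. exists i. split; auto.
              destruct (Nat.eqb_spec i (m - 1)); lia.
      * exists (S m), (fun i => if Nat.eqb i m then N else st i),
               (fun i => if Nat.eqb i m then N else en i).
        split; [|split].
        -- intros i Hi. destruct (Nat.eqb_spec i m) as [->|Hne].
           ++ repeat split; try lia.
              ** intros k Hk. replace k with N by lia. auto.
              ** destruct N as [|N']; [left; auto|right]. simpl. rewrite Nat.sub_0_r.
                 intro HvN'. destruct (H3 N' ltac:(lia) HvN') as [i0 [Hi0 Hk0]].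
                 destruct (H1 i0 Hi0) as [A _].
                 destruct (Nat.eq_dec i0 (m - 1)) as [->|Hne'].
                 --- apply Hc. split; lia.
                 --- assert (Hoi := Ho i0 (m - 1) ltac:(lia)).
                     destruct (H1 (m-1) ltac:(lia)) as [A' _]. lia.
           ++ destruct (H1 i ltac:(lia)) as [A [B [C D]]]. repeat split; try lia; auto.
              destruct D as [D|D]; auto. exfalso.
              destruct (Nat.eq_dec i (m - 1)) as [->|Hne'].
              ** apply Hc. split; lia.
              ** assert (Hoi := Ho i (m - 1) ltac:(lia)).
                 destruct (H1 (m-1) ltac:(lia)) as [A' _]. lia.
        -- intros i Hi. destruct (Nat.eqb_spec i m); [lia|].
           destruct (Nat.eqb_spec (S i) m) as [Hsi|Hsi].
           ++ destruct (H1 i ltac:(lia)) as [A [B [C D]]].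
              destruct D as [D|D].
              ** exfalso. apply Hc. split; [lia|]. replace (m - 1) with i by lia. auto.
              ** destruct (Nat.eq_dec (S (en i)) N) as [E|E]; [rewrite E in D; contradiction|lia].
           ++ apply H2; lia.
        -- intros k Hk Hv. destruct (Nat.eq_dec k N) as [->|].
           ++ exists m. rewrite Nat.eqb_refl. lia.
           ++ destruct (H3 k ltac:(lia) Hv) as [i [Hi Hk']]. exists i. split; [lia|].
              destruct (Nat.eqb_spec i m); lia.
    + exists m, st, en. split; [|split].
      * intros i Hi. destruct (H1 i Hi) as [A [B [C D]]]. repeat split; try lia; auto.
        destruct D as [D|D]; right; auto. rewrite D; auto.
      * auto.
      * intros k Hk Hv. destruct (Nat.eq_dec k N) as [->|]; [contradiction|].
        apply H3; auto; lia.
Qed.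

Local Open Scope R_scope.

Definition clamp (a b z : R) := Rmax a (Rmin b z).

Lemma clamp_in a b z : a <= b -> a <= clamp a b z <= b.
Proof. intros. unfold clamp, Rmax, Rmin. repeat destruct Rle_dec; lra. Qed.
Lemma clamp_id a b z : a <= z <= b -> clamp a b z = z.
Proof. intros. unfold clamp, Rmax, Rmin. repeat destruct Rle_dec; lra. Qed.
Lemma clamp_lip a b z w : a <= w <= b -> Rabs (clamp a b z - w) <= Rabs (z - w).
Proof. intros. unfold clamp, Rmax, Rmin. repeat destruct Rle_dec; unfold Rabs; repeat destruct Rcase_abs; lra. Qed.

Lemma mvt_ab (a b : R) (f f' : R -> R) :
 (forall x, a < x < b -> derivable_pt_lim f x (f' x)) ->
 (forall x, a <= x <= b -> cont_within a b f x) ->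
 forall x y, a <= x -> x < y -> y <= b ->
 exists c, x <= c <= y /\ f y - f x = f' c * (y - x).
Proof.
  intros Hd Hc x y Hax Hxy Hyb.
  set (fe := fun z => f (clamp a b z)).
  destruct (MVT_gen fe x y f') as [c [Hc1 Hc2]].
  - intros z Hz. rewrite Rmin_left in Hz by lra. rewrite Rmax_right in Hz by lra.
    apply is_derive_ext_loc with f.
    + assert (Hp : 0 < Rmin (z - a) (b - z)) by (apply Rmin_pos; lra).
      exists (mkposreal _ Hp). intros t Ht. unfold ball in Ht; simpl in Ht.
      unfold AbsRing_ball, abs, minus, plus, opp in Ht; simpl in Ht.
      unfold fe. rewrite clamp_id; auto.
      assert (Rmin (z-a) (b-z) <= z - a) by apply Rmin_l.
      assert (Rmin (z-a) (b-z) <= b - z) by apply Rmin_r.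
      unfold Rabs in Ht; destruct Rcase_abs in Ht; lra.
    + apply is_derive_Reals. apply Hd. lra.
  - intros z Hz. rewrite Rmin_left in Hz by lra. rewrite Rmax_right in Hz by lra.
    assert (Hzab : a <= z <= b) by lra.
    unfold continuity_pt, continue_in, limit1_in, limit_in. intros eps Heps.
    destruct (Hc z Hzab eps Heps) as [d [Hd0 Hd1]].
    exists d. split; auto. intros t [_ Ht]. simpl in *. unfold R_dist in *.
    unfold fe. rewrite (clamp_id a b z) by auto.
    apply Hd1. apply clamp_in; lra.
    eapply Rle_lt_trans. apply clamp_lip; auto. auto.
  - exists c. rewrite Rmin_left in Hc1 by lra. rewrite Rmax_right in Hc1 by lra.
    split; auto. unfold fe in Hc2. rewrite !clamp_id in Hc2 by lra. auto.
Qed.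


Definition sg (f : R -> R) x : bool := if Rlt_dec 0 (f x) then true else false.
Definition chg f x y : nat := if Bool.eqb (sg f x) (sg f y) then 0%nat else 1%nat.
Fixpoint sc (f : R -> R) (l : list R) : nat :=
  match l with
  | x :: ((y :: _) as t) => (chg f x y + sc f t)%nat
  | _ => 0%nat
  end.

Definition chain (a b : R) (F : nat -> R -> R) (k : nat) :=
  (forall j, (j < k)%nat -> forall x, a < x < b -> derivable_pt_lim (F j) x (F (S j) x)) /\
  (forall j, (j < k)%nat -> forall x, a <= x <= b -> cont_within a b (F j) x).

Lemma sg_true f x : sg f x = true <-> 0 < f x.
Proof. unfold sg; destruct Rlt_dec; split; intros; auto; discriminate. Qed.
Lemma sg_false f x : sg f x = false <-> f x <= 0.
Proof. unfold sg; destruct Rlt_dec; split; intros; try lra; auto; discriminate. Qed.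

Lemma abs_big f x mu : 0 < mu -> mu <= Rabs (f x) ->
  (sg f x = true /\ mu <= f x) \/ (sg f x = false /\ f x <= - mu).
Proof.
  intros Hm H. unfold sg; destruct Rlt_dec.
  - left. split; auto. rewrite Rabs_right in H; lra.
  - right. split; auto. rewrite Rabs_left1 in H; lra.
Qed.

Lemma SS_app_l (l1 l2 : list R) : StronglySorted Rlt (l1 ++ l2) ->
  forall x y, In x l1 -> In y l2 -> x < y.
Proof.
  induction l1; simpl; intros H x y Hx Hy. destruct Hx.
  apply StronglySorted_inv in H as [H1 H2]. destruct Hx as [<-|Hx].
  - rewrite Forall_forall in H2. apply H2, in_or_app; auto.
  - eauto.
Qed.
Lemma SS_app_r (l1 l2 : list R) : StronglySorted Rlt (l1 ++ l2) -> StronglySorted Rlt l2.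
Proof. induction l1; simpl; intros H; auto. apply StronglySorted_inv in H as [H1 H2]; auto. Qed.
Lemma SS_app_1 (l1 l2 : list R) : StronglySorted Rlt (l1 ++ l2) -> StronglySorted Rlt l1.
Proof.
  induction l1; simpl; intros H. constructor.
  apply StronglySorted_inv in H as [H1 H2]. constructor; auto.
  rewrite Forall_forall in *. intros; apply H2, in_or_app; auto.
Qed.


Lemma derive_list (a b : R) (F : nat -> R -> R) mu c d :
  chain a b F 1 -> 0 < mu -> a <= c -> d <= b ->
  forall l y, StronglySorted Rlt (y :: l) ->
  Forall (fun x => c <= x <= d) (y :: l) ->
  Forall (fun x => mu <= Rabs (F 0%nat x)) (y :: l) ->
  exists W, StronglySorted Rlt W /\ Forall (fun w => y <= w <= d) W /\
    Forall (fun w => mu <= Rabs (F 1%nat w) * (d - c)) W /\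
    length W = sc (F 0%nat) (y :: l) /\ sc (F 1%nat) W = pred (length W) /\
    (forall w W', W = w :: W' -> sg (F 1%nat) w = negb (sg (F 0%nat) y)).
Proof.
  intros [Hd Hc] Hmu Hac Hdb. induction l as [|z l IH]; intros y Hs Hin Hab.
  - exists nil. simpl. repeat split; auto. constructor. intros; discriminate.
  - apply StronglySorted_inv in Hs as [Hs Hyf]. inversion Hyf; subst.
    inversion Hin; subst. inversion Hab; subst.
    destruct (IH z Hs H4 H6) as [W' [HW1 [HW2 [HW3 [HW4 [HW5 HW6]]]]]].
    unfold sc; fold sc. unfold chg.
    destruct (Bool.eqb (sg (F 0%nat) y) (sg (F 0%nat) z)) eqn:E.
    + apply Bool.eqb_prop in E.
      exists W'. repeat split; auto.
      * rewrite Forall_forall in *. intros w Hw. specialize (HW2 w Hw). lra.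
      * intros w W'' ->. rewrite E. eapply HW6; eauto.
    + assert (Hne : sg (F 0%nat) y <> sg (F 0%nat) z).
      { intro H. rewrite H, Bool.eqb_reflx in E. discriminate. }
      destruct (mvt_ab a b (F 0%nat) (F 1%nat)) with (x := y) (y := z) as [w [Hw1 Hw2]].
      { intros; apply Hd; auto. } { intros; apply Hc; auto. }
      { lra. } { auto. } { pose proof (Forall_inv H4) as Hz; simpl in Hz. lra. }
      pose proof (Forall_inv H6) as Hzm; simpl in Hzm.
      assert (Hsz : sg (F 1%nat) w = sg (F 0%nat) z /\ 2 * mu <= Rabs (F 1%nat w) * (z - y)).
      { destruct (abs_big (F 0%nat) y mu Hmu H5) as [[A1 A2]|[A1 A2]];
        destruct (abs_big (F 0%nat) z mu Hmu Hzm) as [[B1 B2]|[B1 B2]];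
        rewrite ?A1, ?B1 in Hne; try congruence.
        - rewrite B1. split.
          + apply sg_false. destruct (Rle_dec (F 1%nat w) 0); auto.
            assert (0 < F 1%nat w * (z - y)) by (apply Rmult_lt_0_compat; lra). lra.
          + rewrite Rabs_left1. 2:{ destruct (Rle_dec (F 1%nat w) 0); auto.
            assert (0 < F 1%nat w * (z - y)) by (apply Rmult_lt_0_compat; lra). lra. }
            lra.
        - rewrite B1. split.
          + apply sg_true. destruct (Rlt_dec 0 (F 1%nat w)); auto.
            assert (F 1%nat w * (z - y) <= 0).
            { destruct (Rlt_dec 0 (F 1%nat w)); [lra|]; nra. } lra.
          + rewrite Rabs_right. lra. destruct (Rlt_dec 0 (F 1%nat w)); [lra|].
            assert (F 1%nat w * (z - y) <= 0).
            { destruct (Rlt_dec 0 (F 1%nat w)); [lra|]; nra. } lra. }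
      destruct Hsz as [Hsz Hmag].
      exists (w :: W'). split; [|split; [|split; [|split; [|split]]]].
      * constructor; auto. rewrite Forall_forall in *. intros v Hv.
        destruct W' as [|v0 W'']; [destruct Hv|].
        assert (Hv0 : w < v0).
        { specialize (HW2 v0 (or_introl eq_refl)).
          destruct (Req_dec w v0) as [Heq|]; [|lra]. subst v0.
          specialize (HW6 w W'' eq_refl). rewrite Hsz in HW6.
          destruct (sg (F 0%nat) z); discriminate. }
        destruct Hv as [<-|Hv]; auto.
        apply StronglySorted_inv in HW1 as [_ HW1]. rewrite Forall_forall in HW1.
        specialize (HW1 v Hv). lra.
      * constructor. { pose proof (Forall_inv H4) as Hz2; simpl in Hz2; lra. } rewrite Forall_forall in *. intros v Hv. specialize (HW2 v Hv). lra.
      * constructor; auto.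
        assert (Rabs (F 1%nat w) * (z - y) <= Rabs (F 1%nat w) * (d - c)).
        { apply Rmult_le_compat_l. apply Rabs_pos. pose proof (Forall_inv H4) as Hz2; simpl in Hz2. lra. } lra.
      * simpl. rewrite HW4. reflexivity.
      * destruct W' as [|v0 W'']; [reflexivity|].
        change (sc (F 1%nat) (w :: v0 :: W'')) with (chg (F 1%nat) w v0 + sc (F 1%nat) (v0 :: W''))%nat.
        rewrite HW5. unfold chg. rewrite Hsz, (HW6 v0 W'' eq_refl).
        destruct (sg (F 0%nat) z); simpl; lia.
      * intros w0 W0 [= <- <-]. rewrite Hsz.
        destruct (sg (F 0%nat) y), (sg (F 0%nat) z); simpl; congruence.
Qed.

Lemma chain_shift a b F k : chain a b F (S k) -> chain a b (fun j => F (S j)) k.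
Proof. intros [H1 H2]; split; intros j Hj; [apply (H1 (S j))|apply (H2 (S j))]; lia. Qed.
Lemma chain_1 a b F k : chain a b F (S k) -> chain a b F 1.
Proof. intros [H1 H2]; split; intros j Hj; [apply H1|apply H2]; lia. Qed.
Lemma chain_le a b F k k' : (k' <= k)%nat -> chain a b F k -> chain a b F k'.
Proof. intros Hk [H1 H2]; split; intros j Hj; [apply H1|apply H2]; lia. Qed.

Lemma alt_deriv (a b : R) : forall k F mu c d l,
  chain a b F k -> 0 < mu -> a <= c -> d <= b -> l <> nil ->
  StronglySorted Rlt l -> Forall (fun x => c <= x <= d) l ->
  Forall (fun x => mu <= Rabs (F 0%nat x)) l -> (k <= sc (F 0%nat) l)%nat ->
  exists xi, a <= xi <= b /\ mu <= Rabs (F k xi) * (d - c) ^ k.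
Proof.
  induction k as [|k IH]; intros F mu c d l Hch Hmu Hac Hdb Hl Hs Hin Hab Hk.
  - destruct l as [|y l]; [congruence|]. exists y.
    pose proof (Forall_inv Hin). pose proof (Forall_inv Hab). simpl in *. split; [lra|]. lra.
  - destruct l as [|y l]; [congruence|].
    destruct l as [|z l]; [simpl in Hk; lia|].
    assert (Hcd : c < d).
    { pose proof (Forall_inv Hin) as A. apply Forall_inv_tail in Hin.
      pose proof (Forall_inv Hin) as B. apply StronglySorted_inv in Hs as [_ Hs].
      pose proof (Forall_inv Hs) as C. simpl in *. lra. }
    destruct (derive_list a b F mu c d (chain_1 a b F k Hch) Hmu Hac Hdb (z :: l) y Hs Hin Hab)
      as [W [HW1 [HW2 [HW3 [HW4 [HW5 HW6]]]]]].
    assert (Hdc : 0 < d - c) by lra.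
    destruct (IH (fun j => F (S j)) (mu / (d - c)) c d W) as [xi [Hxi1 Hxi2]].
    + apply chain_shift; auto.
    + apply Rdiv_lt_0_compat; lra.
    + auto. + auto.
    + destruct W; [rewrite <- HW4 in Hk; simpl in Hk; lia|congruence].
    + auto.
    + pose proof (Forall_inv Hin) as A; simpl in A.
      rewrite Forall_forall in *. intros w Hw. specialize (HW2 w Hw). lra.
    + rewrite Forall_forall in *. intros w Hw. specialize (HW3 w Hw).
      unfold Rdiv. apply (Rmult_le_reg_r (d - c)); auto.
      rewrite Rmult_assoc, Rinv_l by lra. lra.
    + simpl. lia.
    + exists xi. split; auto.
      assert (Hm : mu = mu / (d - c) * (d - c)) by (field; lra). rewrite Hm. simpl.
      replace (Rabs (F (S k) xi) * ((d - c) * (d - c) ^ k)) with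
        (Rabs (F (S k) xi) * (d - c) ^ k * (d - c)) by ring.
      apply Rmult_le_compat_r; lra.
Qed.

Lemma split_sc f : forall L k, (k < sc f L)%nat ->
  exists L1 L2, L = L1 ++ L2 /\ L1 <> nil /\ L2 <> nil /\ (k <= sc f L1)%nat /\
    (sc f L <= S (k + sc f L2))%nat.
Proof.
  induction L as [|x L IH]; intros k Hk; [simpl in Hk; lia|].
  destruct L as [|y L']; [simpl in Hk; lia|].
  change (sc f (x :: y :: L')) with (chg f x y + sc f (y :: L'))%nat in *.
  destruct k as [|k'].
  - exists [x], (y :: L'). repeat split; try congruence. simpl. lia.
    unfold chg. destruct Bool.eqb; lia.
  - assert (Hc : (chg f x y <= 1)%nat) by (unfold chg; destruct Bool.eqb; lia).
    destruct (Nat.eq_dec (chg f x y) 0) as [H0|H0].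
    + destruct (IH (S k')) as [L1 [L2 [E [N1 [N2 [S1 S2]]]]]]; [lia|].
      destruct L1 as [|y' L1']; [congruence|]. simpl in E. injection E as Ey E; subst y'.
      exists (x :: y :: L1'), L2. repeat split; try congruence.
      * simpl. rewrite E. reflexivity.
      * change (sc f (x :: y :: L1')) with (chg f x y + sc f (y :: L1'))%nat. lia.
      * lia.
    + destruct (IH k') as [L1 [L2 [E [N1 [N2 [S1 S2]]]]]]; [lia|].
      destruct L1 as [|y' L1']; [congruence|]. simpl in E. injection E as Ey E; subst y'.
      exists (x :: y :: L1'), L2. repeat split; try congruence.
      * simpl. rewrite E. reflexivity.
      * change (sc f (x :: y :: L1')) with (chg f x y + sc f (y :: L1'))%nat. lia.
      * lia.
Qed.

Lemma count_sc a b F r Cr mu h :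
  chain a b F r -> (forall x, a <= x <= b -> Rabs (F r x) <= Cr) -> 0 < mu -> 0 < h ->
  Cr * h ^ r < mu ->
  forall n L c, (length L <= n)%nat -> a <= c <= b -> StronglySorted Rlt L ->
  Forall (fun x => c <= x <= b) L -> Forall (fun x => mu <= Rabs (F 0%nat x)) L ->
  INR (sc (F 0%nat) L) * h <= INR (S r) * (b - c) + INR r * h.
Proof.
  intros Hch HCr Hmu Hh Hhr. induction n as [|n IH]; intros L c Hlen Hc Hs Hin Hab.
  - destruct L; [|simpl in Hlen; lia]. replace (INR (sc (F 0%nat) [])) with 0 by reflexivity.
    assert (0 <= INR (S r) * (b - c)) by (apply Rmult_le_pos; [apply pos_INR|lra]).
    assert (0 <= INR r * h) by (apply Rmult_le_pos; [apply pos_INR|lra]). lra.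
  - destruct (Compare_dec.le_lt_dec (sc (F 0%nat) L) r) as [Hle|Hlt].
    + apply le_INR in Hle.
      assert (INR (sc (F 0%nat) L) * h <= INR r * h) by (apply Rmult_le_compat_r; lra).
      assert (0 <= INR (S r) * (b - c)) by (apply Rmult_le_pos; [apply pos_INR|lra]). lra.
    + destruct (split_sc (F 0%nat) L r Hlt) as [L1 [L2 [E [N1 [N2 [S1 S2]]]]]].
      destruct L2 as [|z L2']; [congruence|].
      subst L.
      assert (Hlt1 : forall x, In x L1 -> x < z).
      { intros x Hx. eapply SS_app_l; eauto. left; auto. }
      assert (Hzb : c <= z <= b).
      { rewrite Forall_forall in Hin. apply Hin, in_or_app. right; left; auto. }
      destruct (alt_deriv a b r F mu c z L1) as [xi [Hxi1 Hxi2]]; auto; try lra.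
      { eapply SS_app_1; eauto. }
      { rewrite Forall_forall in *. intros x Hx. split.
        - apply (Hin x). apply in_or_app; auto.
        - apply Rlt_le, Hlt1; auto. }
      { rewrite Forall_forall in *. intros x Hx. apply Hab, in_or_app; auto. }
      assert (Hzc : h <= z - c).
      { destruct (Rle_dec h (z - c)) as [|Hn]; auto. exfalso.
        assert (A : Rabs (F r xi) * (z - c) ^ r <= Cr * h ^ r).
        { apply Rmult_le_compat. apply Rabs_pos. apply pow_le. lra.
          apply HCr; auto. apply pow_incr. lra. }
        lra. }
      assert (IH2 := IH (z :: L2') z).
      assert (Hl2 : (length (z :: L2') <= n)%nat).
      { rewrite length_app in Hlen. destruct L1; [congruence|]. simpl in Hlen |- *. lia. }
      specialize (IH2 Hl2 ltac:(lra) (SS_app_r _ _ Hs)).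
      assert (Hin2 : Forall (fun x => z <= x <= b) (z :: L2')).
      { pose proof (SS_app_r _ _ Hs) as Hs2. apply StronglySorted_inv in Hs2 as [_ Hs2].
        constructor. lra. rewrite Forall_forall in *. intros x Hx. split.
        - apply Rlt_le, Hs2; auto.
        - apply (Hin x). apply in_or_app. right; right; auto. }
      assert (Hab2 : Forall (fun x => mu <= Rabs (F 0%nat x)) (z :: L2')).
      { rewrite Forall_forall in *. intros x Hx. apply Hab, in_or_app; auto. }
      specialize (IH2 Hin2 Hab2).
      apply le_INR in S2. rewrite S_INR, plus_INR in S2.
      assert (INR (sc (F 0%nat) (L1 ++ z :: L2')) * h <=
              (INR r + INR (sc (F 0%nat) (z :: L2')) + 1) * h) by (apply Rmult_le_compat_r; lra).
      rewrite S_INR in *. assert (INR r * h <= INR r * (z - c)) by (apply Rmult_le_compat_l; [apply pos_INR|lra]). lra.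
Qed.


Definition shiftF (D : nat -> R -> R) (k : R) : nat -> R -> R :=
  fun j => match j with O => fun x => D O x - k | S j' => D (S j') end.

Lemma chain_shiftF a b r g D k : Cr_on r a b g D -> chain a b (shiftF D k) r.
Proof.
  intros [H0 [H1 H2]]. split.
  - intros [|j] Hj x Hx; simpl.
    + replace (D 1%nat x) with (D 1%nat x - 0) by ring.
      apply derivable_pt_lim_minus. apply H2; auto. apply derivable_pt_lim_const.
    + apply H2; auto.
  - intros [|j] Hj x Hx; simpl.
    + intros eps Heps. destruct (H1 0%nat ltac:(lia) x Hx eps Heps) as [d [Hd1 Hd2]].
      exists d. split; auto. intros y Hy Hyx. replace (D 0%nat y - k - (D 0%nat x - k))
        with (D 0%nat y - D 0%nat x) by ring. auto.
    + apply H1; auto. lia.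
Qed.

Fixpoint bl (s t : nat -> R) (k i : nat) : list R :=
  match k with O => [s i] | S k' => s i :: t i :: bl s t k' (S i) end.

Lemma bl_hd s t k i : exists tl, bl s t k i = s i :: tl.
Proof. destruct k; simpl; eauto. Qed.

Lemma alt_count a b r (D : nat -> R -> R) g Cr lam h m (s t : nat -> R) :
  Cr_on r a b g D -> (1 <= r)%nat -> (1 <= m)%nat ->
  (forall i, (i < m)%nat -> a <= s i <= b /\ Rabs (D 0%nat (s i)) < lam) ->
  (forall i, (S i < m)%nat -> s i < t i < s (S i) /\ 2 * lam <= Rabs (D 0%nat (t i))) ->
  (forall x, a <= x <= b -> Rabs (D r x) <= Cr) ->
  0 < lam -> 0 < h -> Cr * h ^ r < lam / 2 ->
  INR (m - 1) * h <= INR (S r) * (b - a) + INR r * h.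
Proof.
  intros HCr Hr1 Hm Hs Ht HDr Hl Hh Hhr.
  assert (Hb : forall k i, (i + k < m)%nat -> Forall (fun x => s i <= x <= b) (bl s t k i)).
  { induction k; intros i Hi; simpl.
    - constructor; [|constructor]. specialize (Hs i ltac:(lia)). lra.
    - specialize (IHk (S i) ltac:(lia)). destruct (Ht i ltac:(lia)) as [[A B] _].
      constructor. specialize (Hs i ltac:(lia)). lra. constructor.
      specialize (Hs (S i) ltac:(lia)). lra.
      rewrite Forall_forall in *. intros x Hx. specialize (IHk x Hx). lra. }
  assert (Hsort : forall k i, (i + k < m)%nat -> StronglySorted Rlt (bl s t k i)).
  { induction k; intros i Hi; simpl.
    - repeat constructor.
    - specialize (IHk (S i) ltac:(lia)). pose proof (Hb k (S i) ltac:(lia)) as HB.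
      destruct (Ht i ltac:(lia)) as [[A B] _].
      constructor; [constructor; auto|].
      + rewrite Forall_forall in *. intros x Hx. specialize (HB x Hx). lra.
      + constructor. lra. rewrite Forall_forall in *. intros x Hx. specialize (HB x Hx). lra. }
  assert (Hlh : forall k i, (i + k < m)%nat ->
     Forall (fun x => Rabs (D 0%nat x) < lam \/ 2 * lam <= Rabs (D 0%nat x)) (bl s t k i)).
  { induction k; intros i Hi; simpl.
    - constructor; [|constructor]. left. apply Hs. lia.
    - specialize (IHk (S i) ltac:(lia)). constructor. left. apply Hs; lia.
      constructor; auto. right. apply Ht. lia. }
  assert (Hmag : forall c k i, (c = 3/2*lam \/ c = - (3/2*lam)) -> (i + k < m)%nat ->
     Forall (fun x => lam / 2 <= Rabs (shiftF D c 0%nat x)) (bl s t k i)).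
  { intros c k i Hc Hi. specialize (Hlh k i Hi). rewrite Forall_forall in *.
    intros x Hx. specialize (Hlh x Hx). simpl.
    unfold Rabs in *; repeat destruct Rcase_abs; lra. }
  assert (Hsc : forall k i, (i + k < m)%nat ->
     (sc (shiftF D (3/2*lam) 0%nat) (bl s t k i) + sc (shiftF D (-(3/2*lam)) 0%nat) (bl s t k i) = 2 * k)%nat).
  { induction k; intros i Hi; [reflexivity|].
    specialize (IHk (S i) ltac:(lia)).
    destruct (bl_hd s t k (S i)) as [tl Etl].
    change (bl s t (S k) i) with (s i :: t i :: bl s t k (S i)).
    rewrite Etl in *.
    change (sc ?f (s i :: t i :: s (S i) :: tl)) with
      (chg f (s i) (t i) + (chg f (t i) (s (S i)) + sc f (s (S i) :: tl)))%nat.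
    destruct (Hs i ltac:(lia)) as [_ A]. destruct (Hs (S i) ltac:(lia)) as [_ B].
    destruct (Ht i ltac:(lia)) as [_ C].
    remember (sc (shiftF D (3/2*lam) 0%nat) (s (S i) :: tl)) as X1.
    remember (sc (shiftF D (-(3/2*lam)) 0%nat) (s (S i) :: tl)) as X2.
    unfold chg, sg, shiftF.
    repeat destruct Rlt_dec; simpl; unfold Rabs in *; repeat destruct Rcase_abs; try lra; lia. }
  destruct (bl_hd s t (m - 1) 0) as [tl Etl].
  assert (Hc1 : forall c, (c = 3/2*lam \/ c = - (3/2*lam)) ->
    INR (sc (shiftF D c 0%nat) (bl s t (m - 1) 0)) * h <= INR (S r) * (b - a) + INR r * h).
  { intros c Hc. eapply (count_sc a b (shiftF D c) r Cr (lam / 2) h).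
    - eapply chain_shiftF; eauto.
    - intros x Hx. destruct r as [|r']; [lia|]. simpl. apply HDr; auto.
    - lra. - auto. - auto.
    - apply le_n.
    - specialize (Hs 0%nat ltac:(lia)). lra.
    - apply Hsort; lia.
    - specialize (Hb (m - 1)%nat 0%nat ltac:(lia)). specialize (Hs 0%nat ltac:(lia)).
      rewrite Forall_forall in *. intros x Hx. specialize (Hb x Hx). lra.
    - apply Hmag; auto; lia. }
  pose proof (Hc1 _ (or_introl eq_refl)) as P1. pose proof (Hc1 _ (or_intror eq_refl)) as P2.
  pose proof (Hsc (m - 1)%nat 0%nat ltac:(lia)) as E.
  apply (f_equal INR) in E. rewrite plus_INR, mult_INR in E. change (INR 2) with (1+1) in E.
  assert (Hr : 0 <= INR r * h) by (apply Rmult_le_pos; [apply pos_INR|lra]).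
  set (X := INR (sc (shiftF D (3 / 2 * lam) 0) (bl s t (m - 1) 0))) in *.
  set (Y := INR (sc (shiftF D (- (3 / 2 * lam)) 0) (bl s t (m - 1) 0))) in *.
  assert (E2 : X * h + Y * h = 2 * (INR (m - 1) * h)) by (rewrite <- Rmult_plus_distr_r; assert (E' : X + Y = (1 + 1) * INR (m - 1)) by exact E; rewrite E'; ring).
  lra.
Qed.


Lemma lip a b r g D : (1 <= r)%nat -> Cr_on r a b g D ->
  (forall t, a <= t <= b -> Rabs (D 1%nat t) <= 1) ->
  forall x y, a <= x <= b -> a <= y <= b -> Rabs (g x - g y) <= Rabs (x - y).
Proof.
  intros Hr [H0 [H1 H2]] HD x y Hx Hy.
  assert (K : forall x y, a <= x <= b -> a <= y <= b -> x < y -> Rabs (g x - g y) <= Rabs (x - y)).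
  { clear x y Hx Hy. intros x y Hx Hy Hxy.
    destruct (mvt_ab a b (D 0%nat) (D 1%nat)) with (x := x) (y := y) as [c [Hc1 Hc2]].
    - intros; apply H2; auto; lia. - intros; apply H1; auto; lia.
    - lra. - auto. - lra.
    - rewrite <- (H0 x Hx), <- (H0 y Hy).
      replace (D 0%nat x - D 0%nat y) with (- (D 1%nat c * (y - x))) by lra.
      rewrite Rabs_Ropp, Rabs_mult. rewrite (Rabs_minus_sym x y).
      assert (Rabs (D 1%nat c) <= 1) by (apply HD; lra).
      assert (0 <= Rabs (y - x)) by apply Rabs_pos. nra. }
  destruct (Rtotal_order x y) as [Hl|[He|Hg]].
  - auto.
  - subst. unfold Rminus. rewrite !Rplus_opp_r, Rabs_R0. lra.
  - rewrite (Rabs_minus_sym (g x)), (Rabs_minus_sym x). auto.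
Qed.

Lemma nat_above x : exists n : nat, x < INR n.
Proof.
  destruct (archimed x) as [H1 H2].
  destruct (Z_le_gt_dec 0 (up x)) as [Hz|Hz].
  - exists (Z.to_nat (up x)). rewrite INR_IZR_INZ, Z2Nat.id; auto.
  - exists 0%nat. simpl. apply Z.gt_lt in Hz. apply IZR_lt in Hz. lra.
Qed.

Lemma find_cell a eta : 0 < eta -> forall e s t, (s <= e)%nat ->
  a + INR s * eta <= t <= a + INR (S e) * eta ->
  exists k, (s <= k <= e)%nat /\ a + INR k * eta <= t <= a + INR (S k) * eta.
Proof.
  intros He. induction e as [|e IH]; intros s t Hs Ht.
  - exists 0%nat. replace s with 0%nat in * by lia. split; [lia|auto].
  - destruct (Nat.eq_dec s (S e)) as [->|Hne].
    + exists (S e). split; [lia|auto].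
    + destruct (Rle_dec t (a + INR (S e) * eta)) as [Hle|Hgt].
      * destruct (IH s t ltac:(lia) ltac:(lra)) as [k [Hk1 Hk2]]. exists k. split; [lia|auto].
      * exists (S e). split; [lia|]. lra.
Qed.

Definition rpow_nonneg x y : 0 <= rpow x y.
Proof. unfold rpow. destruct Req_EM_T; [destruct Req_EM_T; lra|]. unfold Rpower. left; apply exp_pos. Qed.

Lemma pow15 r : (1 <= r)%nat -> 15 <= 15 ^ r.
Proof.
  intros Hr. destruct r as [|r]; [lia|]. simpl.
  assert (1 <= 15 ^ r) by (apply pow_R1_Rle; lra). lra.
Qed.

Lemma final_bound r Cr lam ba m : (1 <= r)%nat -> 0 <= Cr -> 0 < lam -> 0 < ba -> (1 <= m)%nat ->
  (forall h, 0 < h -> Cr * h ^ r < lam / 2 -> INR (m - 1) * h <= INR (S r) * ba + INR r * h) ->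
  INR m <= 30 * INR r * (1 + ba * rpow Cr (/ INR r) * rpow lam (- / INR r)).
Proof.
  intros Hr HCr Hl Hba Hm H.
  assert (Hr' : 1 <= INR r) by (apply (le_INR 1); auto).
  assert (Hrm : INR m = INR (m - 1) + 1).
  { replace m with (S (m - 1)) at 1 by lia. rewrite S_INR. ring. }
  rewrite S_INR in H.
  assert (Hinv : / INR r <> 0) by (apply Rinv_neq_0_compat; lra).
  destruct (Req_dec Cr 0) as [->|HC0].
  - assert (E : rpow 0 (/ INR r) = 0).
    { unfold rpow. destruct Req_EM_T; [|lra]. destruct Req_EM_T; [contradiction|auto]. }
    rewrite E.
    set (h := (INR r + 1) * ba + 1).
    assert (Hh : 0 < h) by (unfold h; nra).
    specialize (H h Hh ltac:(lra)).
    assert (INR (m - 1) < INR r + 1).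
    { destruct (Rlt_dec (INR (m - 1)) (INR r + 1)) as [|Hn]; auto.
      assert ((INR r + 1) * h <= INR (m - 1) * h) by (apply Rmult_le_compat_r; lra).
      unfold h in *. nra. }
    lra.
  - assert (HCp : 0 < Cr) by lra.
    assert (E1 : rpow Cr (/ INR r) = Rpower Cr (/ INR r)).
    { unfold rpow. destruct Req_EM_T; [lra|auto]. }
    assert (E2 : rpow lam (- / INR r) = Rpower lam (- / INR r)).
    { unfold rpow. destruct Req_EM_T; [lra|auto]. }
    rewrite E1, E2.
    set (A := Rpower Cr (/ INR r)). set (B := Rpower lam (- / INR r)).
    assert (HA : 0 < A) by (unfold A, Rpower; apply exp_pos).
    assert (HB : 0 < B) by (unfold B, Rpower; apply exp_pos).
    assert (HAr : A ^ r = Cr).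
    { unfold A. rewrite <- Rpower_pow by (unfold Rpower; apply exp_pos).
      rewrite Rpower_mult. rewrite Rinv_l by lra. apply Rpower_1; auto. }
    assert (HBr : B ^ r = / lam).
    { unfold B. rewrite <- Rpower_pow by (unfold Rpower; apply exp_pos).
      rewrite Rpower_mult. replace (- / INR r * INR r) with (Ropp 1) by (field; lra).
      rewrite Rpower_Ropp, Rpower_1; auto. }
    set (P := A * B).
    assert (HP : 0 < P) by (unfold P; nra).
    set (h := / (15 * P)).
    assert (Hh : 0 < h) by (unfold h; apply Rinv_0_lt_compat; lra).
    assert (Hhr : Cr * h ^ r = lam / 15 ^ r).
    { unfold h. rewrite pow_inv, Rpow_mult_distr. unfold P. rewrite Rpow_mult_distr, HAr, HBr.
      field. split; [apply pow_nonzero; lra|lra]. }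
    assert (H15 := pow15 r Hr).
    assert (Hlt : lam / 15 ^ r < lam / 2).
    { apply Rmult_lt_compat_l; auto. apply Rinv_lt_contravar; lra. }
    specialize (H h Hh ltac:(lra)).
    assert (Hm1 : INR (m - 1) <= 15 * P * ((INR r + 1) * ba) + INR r).
    { assert (K : INR (m - 1) * h * (15 * P) <= ((INR r + 1) * ba + INR r * h) * (15 * P))
        by (apply Rmult_le_compat_r; lra).
      unfold h in K. replace (INR (m - 1) * / (15 * P) * (15 * P)) with (INR (m - 1)) in K
        by (field; lra).
      replace (((INR r + 1) * ba + INR r * / (15 * P)) * (15 * P)) with
        (15 * P * ((INR r + 1) * ba) + INR r) in K by (field; lra). lra. }
    replace (ba * A * B) with (ba * P) by (unfold P; ring).
    assert (0 <= ba * P) by nra.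
    nra.
Qed.


Theorem mainTheorem5 (a b : R) (r : nat) (g : R -> R) (D : nat -> R -> R)
  (Cr gsup C : R) :
  a < b -> (1 <= r)%nat -> Cr_on r a b g D ->
  (forall t, a <= t <= b -> Rabs (D 1%nat t) <= 1) ->
  is_supnorm a b (D r) Cr ->
  is_supnorm a b g gsup ->
  0 < C ->
  forall lam : R, 0 < lam -> lam <= gsup -> C * lam <= b - a ->
  exists (n : nat) (l u : nat -> R) (cl cr : nat -> bool),
    (forall i, (i < n)%nat ->
       rel_open_ok a b (l i) (u i) (cl i) (cr i) /\ C * lam <= u i - l i) /\
    (forall i j, (i < n)%nat -> (j < n)%nat -> i <> j -> forall t,
       rel_interval a b (l i) (u i) (cl i) (cr i) t ->
       ~ rel_interval a b (l j) (u j) (cl j) (cr j) t) /\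
    INR n <= 30 * INR r *
      (1 + (b - a) * rpow Cr (/ INR r) * rpow lam (- / INR r)) /\
    (forall t, a <= t <= b -> Rabs (g t) < lam ->
       exists i, (i < n)%nat /\ rel_interval a b (l i) (u i) (cl i) (cr i) t) /\
    (forall i t, (i < n)%nat -> rel_interval a b (l i) (u i) (cl i) (cr i) t ->
       Rabs (g t) < (8 + C) * lam).
Proof.
  intros Hab Hr HCr HD1 HsupCr Hsupg HC lam Hlam Hlg HClam.
  pose proof (lip a b r g D Hr HCr HD1) as Hlip.
  destruct (nat_above ((b - a) / lam)) as [N HN].
  assert (HN0 : 0 < (b - a) / lam) by (apply Rdiv_lt_0_compat; lra).
  assert (HN1 : (1 <= N)%nat).
  { destruct N; [simpl in HN; lra|lia]. }
  assert (HNp : 0 < INR N) by lra.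
  set (eta := (b - a) / INR N).
  assert (Heta : 0 < eta) by (apply Rdiv_lt_0_compat; lra).
  assert (Hetal : eta <= lam).
  { unfold eta. apply (Rmult_le_reg_r (INR N)); auto. unfold Rdiv.
    rewrite Rmult_assoc, Rinv_l by lra.
    assert (b - a < lam * INR N).
    { apply (Rmult_lt_reg_r (/ lam)). apply Rinv_0_lt_compat; lra.
      replace (lam * INR N * / lam) with (INR N) by (field; lra). exact HN. }
    lra. }
  set (p := fun k : nat => a + INR k * eta).
  assert (p0 : p 0%nat = a) by (unfold p; simpl; ring).
  assert (pN : p N = b) by (unfold p, eta; field; lra).
  assert (pS : forall k, p (S k) = p k + eta) by (intros; unfold p; rewrite S_INR; ring).
  assert (pmono : forall k k', (k <= k')%nat -> p k <= p k').
  { intros k k' Hk. unfold p. apply le_INR in Hk.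
    assert (INR k * eta <= INR k' * eta) by (apply Rmult_le_compat_r; lra). lra. }
  assert (pstrict : forall k k', (k < k')%nat -> p k < p k').
  { intros k k' Hk. unfold p. apply lt_INR in Hk.
    assert (INR k * eta < INR k' * eta) by (apply Rmult_lt_compat_r; lra). lra. }
  assert (pin : forall k, (k <= N)%nat -> a <= p k <= b).
  { intros k Hk. split; [rewrite <- p0; apply pmono; lia|rewrite <- pN; apply pmono; auto]. }
  assert (Hfind : forall s e t, (s <= e)%nat -> p s <= t <= p (S e) ->
     exists k, (s <= k <= e)%nat /\ p k <= t <= p (S k)).
  { intros s e t Hse Ht. apply (find_cell a eta Heta e s t Hse Ht). }
  set (low := fun k => exists x, p k <= x <= p (S k) /\ Rabs (g x) < lam).
  set (ok := fun k => forall x, p k <= x <= p (S k) -> Rabs (g x) < (2 + C) * lam).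
  set (V := fun k => exists j, (j < N)%nat /\ low j /\
     forall q, ((j <= q <= k)%nat \/ (k <= q <= j)%nat) -> ok q).
  assert (lowok : forall k, (k < N)%nat -> low k -> ok k).
  { intros k Hk [x0 [Hx0 Hg0]] x Hx.
    assert (A1 := pin k ltac:(lia)). assert (A2 := pin (S k) ltac:(lia)).
    assert (K := Hlip x x0 ltac:(lra) ltac:(lra)). rewrite pS in *.
    assert (Rabs (x - x0) <= eta) by (unfold Rabs; destruct Rcase_abs; lra).
    assert (Rabs (g x) <= Rabs (g x0) + Rabs (g x - g x0)).
    { replace (g x) with (g x0 + (g x - g x0)) at 1 by ring. apply Rabs_triang. }
    assert (0 < C * lam) by (apply Rmult_lt_0_compat; lra). lra. }
  assert (Vok : forall k, V k -> ok k).
  { intros k [j [_ [_ H]]]. apply H. lia. }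
  assert (lowV : forall k, (k < N)%nat -> low k -> V k).
  { intros k Hk Hl. exists k. split; [auto|split; [auto|]]. intros q Hq.
    replace q with k by lia. auto. }
  destruct (runs_exist V N) as [m [st [en Hrun]]].
  pose proof (runs_order' _ _ _ _ _ Hrun) as Hord.
  destruct Hrun as [R1 [R2 R3]].
  assert (Hlowin : forall i, (i < m)%nat -> exists j, (st i <= j <= en i)%nat /\ low j).
  { intros i Hi. destruct (R1 i Hi) as [A [B [C1 D1]]].
    destruct (B (st i) ltac:(lia)) as [j [Hj [Hlj Hq]]].
    exists j. split; [|auto].
    destruct (Compare_dec.lt_dec j (st i)) as [Hlt|Hge].
    - exfalso. destruct C1 as [C1|C1]; [lia|]. apply C1. exists j. split; [auto|split; [auto|]].
      intros q Hq'. apply Hq. lia.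
    - destruct (Compare_dec.le_dec j (en i)) as [|Hgt]; [lia|].
      exfalso. destruct D1 as [D2|D2]; [lia|]. apply D2. exists j. split; [auto|split; [auto|]].
      intros q Hq'. apply Hq. lia. }
  assert (Hch1 : forall i : nat, exists y : nat * R, (i < m)%nat ->
     (st i <= fst y <= en i)%nat /\ p (fst y) <= snd y <= p (S (fst y)) /\ Rabs (g (snd y)) < lam).
  { intros i. destruct (Compare_dec.lt_dec i m) as [Hi|Hi].
    - destruct (Hlowin i Hi) as [j [Hj [x [Hx Hgx]]]]. exists (j, x). intros _. simpl. auto.
    - exists (0%nat, 0). intros; lia. }
  apply functional_choice in Hch1 as [f Hf].
  set (js := fun i => fst (f i)). set (s := fun i => snd (f i)).
  assert (Hs : forall i, (i < m)%nat -> (st i <= js i <= en i)%nat /\ p (js i) <= s i <= p (S (js i))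
     /\ Rabs (g (s i)) < lam) by (intros; apply Hf; auto).
  assert (runok : forall i q, (i < m)%nat -> (st i <= q <= en i)%nat -> ok q).
  { intros i q Hi Hq. apply Vok. destruct (R1 i Hi) as [_ [B _]]. auto. }
  assert (Hch2 : forall i : nat, exists x : R, (S i < m)%nat ->
     p (S (js i)) <= x <= p (S (S (en i))) /\ (2 + C) * lam <= Rabs (g x)).
  { intros i. destruct (Compare_dec.lt_dec (S i) m) as [Hi|Hi].
    - apply NNPP. intro Hn.
      destruct (Hs i ltac:(lia)) as [Hj _].
      destruct (R1 i ltac:(lia)) as [A [B [C1 D1]]].
      assert (Hst := R1 (S i) Hi). assert (Hsi := R2 i Hi).
      destruct D1 as [D2|D2]; [lia|]. apply D2.
      destruct (Hs i ltac:(lia)) as [Hj1 [Hj2 Hj3]].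
      exists (js i). split; [lia|split].
      + exists (s i). split; auto.
      + intros q Hq. destruct (Compare_dec.le_dec q (en i)) as [Hqe|Hqe].
        * apply (runok i); [lia|lia].
        * replace q with (S (en i)) by lia. intros x Hx.
          destruct (Rlt_dec (Rabs (g x)) ((2 + C) * lam)) as [|Hnx]; auto.
          exfalso. apply Hn. exists x. intros _. split; [|lra].
          split; [|lra]. assert (p (S (js i)) <= p (S (en i))) by (apply pmono; lia). lra.
    - exists 0. intros; lia. }
  apply functional_choice in Hch2 as [t Ht].
  assert (Hgs : forall x, a <= x <= b -> D 0%nat x = g x) by (destruct HCr; auto).
  assert (HDr : forall x, a <= x <= b -> Rabs (D r x) <= Cr).
  { intros x Hx. destruct HsupCr as [Hub _]. apply Hub. exists x. auto. }
  assert (HCr0 : 0 <= Cr).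
  { assert (Rabs (D r a) <= Cr) by (apply HDr; lra). pose proof (Rabs_pos (D r a)). lra. }
  exists m, (fun i => p (st i)), (fun i => p (S (en i))),
    (fun i => Nat.eqb (st i) 0), (fun i => Nat.eqb (S (en i)) N).
  split; [|split; [|split; [|split]]].
  -
    intros i Hi. destruct (R1 i Hi) as [A [B [C1 D1]]].
    destruct (Hs i Hi) as [Hj1 [Hj2 Hj3]].
    assert (Hps := pin (st i) ltac:(lia)). assert (Hpe := pin (S (en i)) ltac:(lia)).
    split.
    + unfold rel_open_ok. split; [split; [lra|apply pstrict; lia]|split; [lra|split]].
      * intros E. apply Nat.eqb_eq in E. rewrite E. auto.
      * intros E. apply Nat.eqb_eq in E. rewrite E. auto.
    + assert (Hsin : p (st i) <= s i <= p (S (en i))).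
      { assert (p (st i) <= p (js i)) by (apply pmono; lia).
        assert (p (S (js i)) <= p (S (en i))) by (apply pmono; lia). lra. }
      assert (HL : st i = 0%nat \/ p (st i) <= s i - C * lam).
      { destruct (Nat.eq_dec (st i) 0) as [E|Hne]; [left; auto|right].
        destruct C1 as [C1|C1]; [lia|].
        destruct (Rle_dec (p (st i)) (s i - C * lam)) as [|Hn]; auto. exfalso. apply C1.
        exists (js i). split; [lia|split]. { exists (s i). auto. }
        intros q Hq. destruct (Nat.eq_dec q (st i - 1)) as [->|Hq'].
        - intros x Hx. assert (Ex : S (st i - 1) = st i) by lia. rewrite Ex in Hx.
          assert (Ep := pS (st i - 1)%nat). rewrite Ex in Ep.
          assert (Hp1 := pin (st i - 1)%nat ltac:(lia)).
          assert (K := Hlip x (s i) ltac:(lra) ltac:(lra)).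
          assert (Rabs (x - s i) < C * lam + lam) by (unfold Rabs; destruct Rcase_abs; lra).
          assert (Rabs (g x) <= Rabs (g (s i)) + Rabs (g x - g (s i))).
          { replace (g x) with (g (s i) + (g x - g (s i))) at 1 by ring. apply Rabs_triang. }
          lra.
        - apply (runok i); lia. }
      assert (HR : S (en i) = N \/ s i + C * lam <= p (S (en i))).
      { destruct (Nat.eq_dec (S (en i)) N) as [E|Hne]; [left; auto|right].
        destruct D1 as [D2|D2]; [lia|].
        destruct (Rle_dec (s i + C * lam) (p (S (en i)))) as [|Hn]; auto. exfalso. apply D2.
        exists (js i). split; [lia|split]. { exists (s i). auto. }
        intros q Hq. destruct (Nat.eq_dec q (S (en i))) as [->|Hq'].
        - intros x Hx.
          assert (Ep := pS (S (en i))).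
          assert (Hp1 := pin (S (S (en i))) ltac:(lia)).
          assert (K := Hlip x (s i) ltac:(lra) ltac:(lra)).
          assert (Rabs (x - s i) < C * lam + lam) by (unfold Rabs; destruct Rcase_abs; lra).
          assert (Rabs (g x) <= Rabs (g (s i)) + Rabs (g x - g (s i))).
          { replace (g x) with (g (s i) + (g x - g (s i))) at 1 by ring. apply Rabs_triang. }
          lra.
        - apply (runok i); lia. }
      destruct HL as [HL|HL]; destruct HR as [HR|HR].
      * rewrite HL, HR, p0, pN. lra.
      * lra. * lra. * lra.
  -
    intros i j Hi Hj Hij x Hxi Hxj.
    unfold rel_interval in *.
    destruct Hxi as [_ [Li Ui]]. destruct Hxj as [_ [Lj Uj]].
    assert (x <= p (S (en i))) by (destruct Ui as [|[_ ?]]; lra).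
    assert (p (st i) <= x) by (destruct Li as [|[_ ?]]; lra).
    assert (x <= p (S (en j))) by (destruct Uj as [|[_ ?]]; lra).
    assert (p (st j) <= x) by (destruct Lj as [|[_ ?]]; lra).
    destruct (Nat.lt_total i j) as [Hlt|[Heq|Hgt]]; [|contradiction|].
    + assert (p (S (en i)) < p (st j)) by (apply pstrict; apply Hord; lia). lra.
    + assert (p (S (en j)) < p (st i)) by (apply pstrict; apply Hord; lia). lra.
  -
    destruct (Nat.eq_dec m 0) as [->|Hm0].
    + simpl. assert (H1 := rpow_nonneg Cr (/ INR r)). assert (H2 := rpow_nonneg lam (- / INR r)).
      assert (0 <= (b - a) * rpow Cr (/ INR r)) by (apply Rmult_le_pos; lra).
      assert (0 <= (b - a) * rpow Cr (/ INR r) * rpow lam (- / INR r)) by (apply Rmult_le_pos; lra).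
      assert (0 <= INR r) by apply pos_INR. nra.
    + apply final_bound; auto; try lra; try lia.
      intros h Hh Hhr. apply (alt_count a b r D g Cr lam h m s t); auto; try lia.
      * intros i Hi. destruct (Hs i Hi) as [Hj1 [Hj2 Hj3]].
        destruct (R1 i Hi) as [A _].
        assert (P1 := pin (js i) ltac:(lia)). assert (P2 := pin (S (js i)) ltac:(lia)).
        split; [lra|]. rewrite Hgs by lra. auto.
      * intros i Hi. destruct (Ht i Hi) as [Ht1 Ht2].
        destruct (Hs i ltac:(lia)) as [Hj1 [Hj2 Hj3]].
        destruct (Hs (S i) Hi) as [Hk1 [Hk2 Hk3]].
        destruct (R1 i ltac:(lia)) as [A _]. destruct (R1 (S i) Hi) as [A' _].
        assert (Ho := R2 i Hi).
        assert (P1 := pin (S (S (en i))) ltac:(lia)). assert (P2 := pin (S (js i)) ltac:(lia)).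
        assert (p (S (S (en i))) <= p (js (S i))) by (apply pmono; lia).
        assert (Hlt1 : s i < t i).
        { destruct (Rlt_dec (s i) (t i)) as [|Hn]; auto. assert (Eq1 : s i = t i) by lra.
          rewrite <- Eq1 in Ht2. assert (0 < C * lam) by (apply Rmult_lt_0_compat; lra). lra. }
        assert (Hlt2 : t i < s (S i)).
        { destruct (Rlt_dec (t i) (s (S i))) as [|Hn]; auto. assert (Eq1 : s (S i) = t i) by lra.
          rewrite <- Eq1 in Ht2. assert (0 < C * lam) by (apply Rmult_lt_0_compat; lra). lra. }
        split; [lra|]. rewrite Hgs by lra.
        assert (0 < C * lam) by (apply Rmult_lt_0_compat; lra). lra.
  -
    intros x Hx Hgx.
    destruct (Hfind 0%nat (N - 1)%nat x) as [k [Hk Hxk]].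
    { lia. }
    { rewrite p0. replace (S (N - 1)) with N by lia. rewrite pN. lra. }
    assert (Hlk : low k) by (exists x; auto).
    destruct (R3 k ltac:(lia) (lowV k ltac:(lia) Hlk)) as [i [Hi Hik]].
    exists i. split; auto. destruct (R1 i Hi) as [A [B [C1 D1]]].
    unfold rel_interval. split; [auto|split].
    + assert (p (st i) <= p k) by (apply pmono; lia).
      destruct (Rlt_dec (p (st i)) x) as [|Hn]; [left; auto|right].
      split; [|lra]. apply Nat.eqb_eq.
      destruct (Nat.eq_dec (st i) 0) as [E0|Hne]; [auto|exfalso].
      destruct C1 as [C1|C1]; [lia|]. apply C1. apply lowV; [lia|].
      exists x. replace (S (st i - 1)) with (st i) by lia. split; [|auto]. split; [|lra].
      assert (p (st i - 1)%nat <= p (st i)) by (apply pmono; lia). lra.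
    + assert (p (S k) <= p (S (en i))) by (apply pmono; lia).
      destruct (Rlt_dec x (p (S (en i)))) as [|Hn]; [left; auto|right].
      split; [|lra]. apply Nat.eqb_eq.
      destruct (Nat.eq_dec (S (en i)) N) as [E0|Hne]; [auto|exfalso].
      destruct D1 as [D2|D2]; [lia|]. apply D2. apply lowV; [lia|].
      exists x. split; [|auto]. split; [lra|].
      assert (p (S (en i)) <= p (S (S (en i)))) by (apply pmono; lia). lra.
  -
    intros i x Hi Hx. destruct Hx as [Hxab [Lx Ux]].
    assert (p (st i) <= x <= p (S (en i))) by (destruct Lx as [|[_ ?]]; destruct Ux as [|[_ ?]]; lra).
    destruct (R1 i Hi) as [A [B _]].
    destruct (Hfind (st i) (en i) x) as [k [Hk Hxk]]; [lia|auto|].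
    assert (Hok : ok k) by (apply Vok, B; lia).
    specialize (Hok x Hxk). lra.
Qed.
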